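(* Let $G$ be a loopless multigraph, let $k \geq 1$, and let $M$ be a maximal $k$-edge-colorable subgraph of $G$ (maximal with respect to inclusion of edge sets). For every $v \in V(G)$ with $d_M(v) < k$, \[ d^{F}(v) \leq d_M(v) - \sum_{w \in U_k(v)}\bigl(k - d_M(w) - \mu_G(v,w)\bigr). \]
   Context: For vertices $v,w$ of a multigraph $G$, $\mu_G(v,w)$ is the number of edges joining $v$ and $w$; for a subgraph $M$, $\mu_M(v,w)$ is the number of $M$-edges joining them and $d_M(v)$ is the number of $M$-edges incident to $v$. $N(v)=N_G(v)$ is the set of neighbors of $v$ in $G$. A proper $k$-edge-coloring assigns colors from $\{1,\dots,k\}$ so that distinct edges sharing an endpoint get distinct colors. For each $v\in V(G)$ define $F_k(v) = \{w \in N(v) : d_M(w) \leq k - \mu_G(v,w)\}$, $U_k(v) = \{w \in F_k(v) : \mu_M(v,w) < \mu_G(v,w)\}$, and $d^{F}(v) = \sum_{w\in F_k(v)} \mu_G(v,w)$. *)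

(* Defs.v *)
From HB Require Import structures.
From mathcomp Require Import all_boot all_order all_algebra.
Set Implicit Arguments. Unset Strict Implicit. Unset Printing Implicit Defensive.

(* A multigraph G with finite vertex type V and finite edge type E;
   edge e joins src e and tgt e.  Loopless: src e != tgt e. *)
Section Multigraph.
Variables (V E : finType) (src tgt : E -> V).

Definition loopless := forall e : E, src e != tgt e.

Definition joins (e : E) (v w : V) : bool :=
  ((src e == v) && (tgt e == w)) || ((src e == w) && (tgt e == v)).

Definition incident (e : E) (v : V) : bool := (src e == v) || (tgt e == v).

Definition muG (v w : V) : nat := #|[set e : E | joins e v w]|.
(* mu_M(v,w), M a (spanning) subgraph given by its edge set *)
Definition muM (M : {set E}) (v w : V) : nat := #|[set e in M | joins e v w]|.
Definition degM (M : {set E}) (v : V) : nat := #|[set e in M | incident e v]|.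
Definition nbhd (v : V) : {set V} := [set w | (0 < muG v w)%N].

Definition proper_coloring (k : nat) (M : {set E}) (c : E -> 'I_k) : Prop :=
  forall e f, e \in M -> f \in M -> e != f ->
    (exists v, incident e v && incident f v) -> c e != c f.

Definition k_edge_colorable (k : nat) (M : {set E}) : Prop :=
  exists c : E -> 'I_k, @proper_coloring k M c.

Definition maximal_k_colorable (k : nat) (M : {set E}) : Prop :=
  k_edge_colorable k M /\
  forall M' : {set E}, M \proper M' -> ~ k_edge_colorable k M'.

(* F_k(v) = {w in N(v) : d_M(w) <= k - mu_G(v,w)}  (integer arithmetic,
   written without truncated subtraction) *)
Definition Fk (k : nat) (M : {set E}) (v : V) : {set V} :=
  [set w in nbhd v | (degM M w + muG v w <= k)%N].

Definition Uk (k : nat) (M : {set E}) (v : V) : {set V} :=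
  [set w in Fk k M v | (muM M v w < muG v w)%N].

Definition dF (k : nat) (M : {set E}) (v : V) : nat :=
  (\sum_(w in Fk k M v) muG v w)%N.

End Multigraph.

(* Main.v *)
Require Import Defs.
From HB Require Import structures.
From mathcomp Require Import all_boot all_order all_algebra.
From mathcomp Require Import zify.
Set Implicit Arguments. Unset Strict Implicit. Unset Printing Implicit Defensive.

Lemma dvd_range L m : 0 < m < 2 * L -> L %| m -> m = L.
Proof.
move=> /andP[h1 h2] /dvdnP[q eq]; subst m.
have L0 : 0 < L by case: L h2 {h1} => //; rewrite muln0.
have q2 : q < 2 by rewrite -(ltn_pmul2r L0).
have q0 : 0 < q by move: h1; case: (q).
clear h1 h2.
by case: q q0 q2 {L0} => [|[|]] //; rewrite mul1n.
Qed.

Section Fan.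
Variables (V E : finType) (src tgt : E -> V) (k : nat).
Hypothesis loopl : loopless src tgt.
Variable v : V.

Local Notation incid := (incident src tgt).
Local Notation proper := (@proper_coloring V E src tgt k).
Local Notation colorable := (@k_edge_colorable V E src tgt k).

Definition miss (phi : E -> 'I_k) (S : {set E}) (x : V) : {set 'I_k} :=
  [set c | [forall e in S, incid e x ==> (phi e != c)]].

Lemma missP phi (S : {set E}) x c :
  reflect (forall e, e \in S -> incid e x -> phi e != c) (c \in miss phi S x).
Proof.
rewrite inE; apply: (iffP forallP) => [H e eS ex|H e].
  by move: (H e); rewrite eS ex.
by apply/implyP => eS; apply/implyP; apply: H.
Qed.

Lemma pc_eq (S : {set E}) phi e f x : proper S phi -> e \in S -> f \in S ->
  incid e x -> incid f x -> phi e = phi f -> e = f.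
Proof.
move=> pr eS fS ex fx efq; apply/eqP; apply: contraT => nef.
by move: (pr e f eS fS nef (ex_intro _ x (introT andP (conj ex fx)))); rewrite efq eqxx.
Qed.

Lemma proper_sub (S S' : {set E}) phi : S' \subset S -> proper S phi -> proper S' phi.
Proof. by move=> sub pr e f eS fS; apply: pr; apply: (subsetP sub). Qed.

Definition far (e : E) : V := if src e == v then tgt e else src e.

Lemma incid_v e x : incid e v -> incid e x = (x == v) || (x == far e).
Proof.
rewrite /incident /far; case: (eqVneq (src e) v) => [->|nsv] /=.
  by rewrite eq_sym; case: (tgt e == x) (eq_sym (tgt e) x) => <-; rewrite ?orbT ?orbF.
move=> /eqP tv; rewrite -tv (eq_sym (src e)) (eq_sym (tgt e)) orbC //.
Qed.

Lemma far_neq e : incid e v -> far e != v.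
Proof.
rewrite /incident /far; case: (eqVneq (src e) v) => [sv|nsv] /= H.
  by rewrite -sv eq_sym loopl.
by [].
Qed.

Lemma incid_far e : incid e v -> incid e (far e).
Proof. by move=> H; rewrite incid_v // eqxx orbT. Qed.

Definition upd (phi : E -> 'I_k) g c : E -> 'I_k := fun e => if e == g then c else phi e.

Lemma proper_upd (S : {set E}) phi g c : proper S phi -> g \notin S -> incid g v ->
  (forall f, f \in S -> incid f v -> phi f != c) ->
  (forall f, f \in S -> incid f (far g) -> phi f != c) ->
  proper (g |: S) (upd phi g c).
Proof.
move=> pr gS gv Hv Hf e f; rewrite !inE /upd.
have side : forall f x, f \in S -> incid g x -> incid f x -> phi f != c.
  move=> f' x f'S; rewrite incid_v // => /orP[] /eqP -> ; [exact: Hv| exact: Hf].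
case: (eqVneq e g) => [->|neg] /=; case: (eqVneq f g) => [->|nfg] //=.
- move=> _ fS _ [x /andP[gx fx]]; rewrite eq_sym; exact: side fS gx fx.
- by move=> eS _ _ [x /andP[ex gx]]; exact: side eS gx ex.
- by move=> eS fS nef ex; apply: pr.
Qed.

Lemma colorable_add (S : {set E}) phi g c : proper S phi -> g \notin S -> incid g v ->
  c \in miss phi S v -> c \in miss phi S (far g) -> colorable (g |: S).
Proof.
move=> pr gS gv /missP m1 /missP m2; exists (upd phi g c).
by apply: proper_upd.
Qed.

Definition rel phi (S : {set E}) u x := [exists h, [&& h \in S, incid h v, far h == x & phi h \in miss phi S u]].

Lemma fan_b n : forall S phi g p, size p <= n -> proper S phi -> g \notin S -> incid g v ->
  ~ colorable (g |: S) -> path (rel phi S) (far g) p -> uniq (far g :: p) ->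
  forall c, c \in miss phi S v -> c \notin miss phi S (last (far g) p).
Proof.
elim: n => [|n IH] S phi g [|y1 p] //= szp pr gS gv ncol.
- by move=> _ _ c cv; apply/negP => cg; apply: ncol; apply: colorable_add cv cg.
- by move=> _ _ c cv; apply/negP => cg; apply: ncol; apply: colorable_add cv cg.
move=> /andP[/existsP[h1 /and4P[h1S h1v /eqP fh1 gam]] pth].
rewrite inE negb_or => /andP[/andP[ny0y1 ny0p] /andP[y1p up]] c cv.
set y0 := far g in ny0y1 ny0p gam *.
set gm := phi h1.
set S' := g |: (S :\ h1).
set phi' := upd phi g gm.
have gh1 : g != h1 by apply: contraNneq gS => ->.
have pr' : proper S' phi'.
  apply: proper_upd => //.
  - by apply: proper_sub pr; apply: subD1set.
  - by rewrite !inE negb_and gS orbT.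
  - move=> f; rewrite !inE => /andP[nfh fS] fv; apply/eqP => fg.
    by move/eqP: nfh; apply; apply: (pc_eq pr fS h1S fv h1v).
  - by move=> f; rewrite !inE => /andP[_ fS] fy; move/missP: gam; apply.
have msup : forall u d, u != y0 -> (u == v -> gm != d) -> d \in miss phi S u -> d \in miss phi' S' u.
  move=> u d uy dv du; apply/missP => e; rewrite !inE /phi' /upd.
  case: (eqVneq e g) => [->|neg] /=.
    by move=> _; rewrite incid_v // (negbTE uy) orbF; apply: dv.
  by move=> /andP[_ eS] eu; move/missP: du; apply.
have vy0 : v != y0 by rewrite eq_sym far_neq.
have cv' : c \in miss phi' S' v.
  by apply: msup => // _; move/missP: cv; apply.
have h1S' : h1 \notin S' by rewrite !inE eqxx /= eq_sym (negbTE gh1).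
have ncol' : ~ colorable (h1 |: S').
  suff -> : h1 |: S' = g |: S by [].
  apply/setP => e; rewrite !inE; case: (eqVneq e h1) => [->|] //=.
  by rewrite h1S orbT.
have pth' : forall u q, u != y0 -> all (fun z => (z != y0) && (z != y1)) q ->
    path (rel phi S) u q -> path (rel phi' S') u q.
  move=> u q; elim: q u => [|z q IHq] u //= uy /andP[/andP[zy0 zy1] aq] /andP[r pq].
  apply/andP; split; last by apply: IHq.
  case/existsP: r => h /and4P[hS hv /eqP fh hm]; apply/existsP; exists h.
  have hh1 : h != h1 by apply: contraNneq zy1 => e; rewrite -fh e fh1.
  have hg : h != g by apply: contraNneq gS => <-.
  apply/and4P; split => //; first by rewrite !inE hh1 hS orbT.
    by rewrite fh.
  rewrite {1}/phi' /upd (negbTE hg).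
  apply: msup => // /eqP uv; apply/eqP => ee.
  by move/eqP: hh1; apply; apply: (pc_eq pr hS h1S hv h1v); rewrite -ee.
have allp : all (fun z => (z != y0) && (z != y1)) p.
  apply/allP => z zp; apply/andP; split.
    by apply: contraNneq ny0p => <-.
  by apply: contraNneq y1p => <-.
have y1y0 : y1 != y0 by rewrite eq_sym.
have := IH S' phi' h1 p (ltnSE szp) pr' h1S' h1v ncol'.
rewrite fh1 => /(_ (pth' _ _ y1y0 allp pth)).
rewrite /= y1p up => /(_ isT c cv') H.
apply: contra H => Hc; apply: msup => //.
  have : last y1 p \in y1 :: p by apply: mem_last.
  by rewrite inE => /orP[/eqP ->|lp]; [rewrite eq_sym| apply: contraNneq ny0p => <-].
by move=> _; apply/eqP => ee; move/missP: cv => /(_ h1 h1S h1v); rewrite -/gm ee eqxx.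
Qed.

Section Kempe.
Variables (M : {set E}) (phi : E -> 'I_k).
Hypothesis prM : proper M phi.

Definition other (e : E) (x : V) := if src e == x then tgt e else src e.

Lemma incid_other e x : incid e (other e x).
Proof. by rewrite /other /incident; case: (src e == x); rewrite eqxx ?orbT. Qed.

Lemma other_other e x : incid e x -> other e (other e x) = x.
Proof.
rewrite /other; case: (eqVneq (src e) x) => [sx|nsx] ex.
  by rewrite (negbTE (loopl e)).
by rewrite eqxx; move: ex; rewrite /incident (negbTE nsx) => /eqP.
Qed.

Lemma other_neq e x : incid e x -> other e x != x.
Proof.
rewrite /other /incident; case: (eqVneq (src e) x) => [<-|nsx] /=.
  by rewrite eq_sym loopl.
by [].
Qed.

Definition nc (c : 'I_k) (x : V) : V :=
  if [pick e in M | (phi e == c) && incid e x] is Some e then other e x else x.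

Lemma ncE e x : e \in M -> incid e x -> nc (phi e) x = other e x.
Proof.
move=> eM ex; rewrite /nc; case: pickP => [e' /andP[e'M /andP[/eqP ce ex']]|].
  by rewrite (pc_eq prM e'M eM ex' ex ce).
by move/(_ e); rewrite eM eqxx ex.
Qed.

Lemma nc_miss c x : c \in miss phi M x -> nc c x = x.
Proof.
move/missP => H; rewrite /nc; case: pickP => [e /andP[eM /andP[/eqP ce ex]]|] //.
by move: (H e eM ex); rewrite ce eqxx.
Qed.

Lemma miss_ex c x : c \notin miss phi M x -> exists2 e, e \in M & incid e x && (phi e == c).
Proof.
rewrite inE negb_forall => /existsP[e]; rewrite negb_imply => /andP[eM].
by rewrite negb_imply negbK => H; exists e.
Qed.

Lemma nc_invol c x : nc c (nc c x) = x.
Proof.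
case: (boolP (c \in miss phi M x)) => [cm|].
  by rewrite !nc_miss.
case/miss_ex => e eM /andP[ex /eqP <-].
by rewrite ncE // ncE ?other_other // incid_other.
Qed.

Lemma nc_fix c x : nc c x = x -> c \in miss phi M x.
Proof.
move=> H; apply/missP => e eM ex; apply/eqP => ce.
by move: H; rewrite -ce ncE // => /eqP; rewrite (negbTE (other_neq ex)).
Qed.

Variables (al be : 'I_k).

Definition sig x := nc al (nc be x).
Definition tau x := nc be (nc al x).
Lemma sigK : cancel tau sig.
Proof. by move=> x; rewrite /sig /tau nc_invol nc_invol. Qed.
Lemma tauK : cancel sig tau.
Proof. by move=> x; rewrite /sig /tau nc_invol nc_invol. Qed.
Lemma sig_inj : injective sig. Proof. exact: can_inj tauK. Qed.

Definition kr x y := (y == nc al x) || (y == nc be x).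

Lemma kr_sym : symmetric kr.
Proof.
move=> x y; rewrite /kr; apply/idP/idP => /orP[] /eqP ->;
  by rewrite nc_invol eqxx ?orbT.
Qed.

Section K3.
Variable w : V.
Hypothesis wal : nc al w = w.

Lemma iter_tau i : nc al (iter i sig w) = iter i tau w.
Proof.
elim: i => [|i IH] //=.
by rewrite /sig nc_invol /tau -IH nc_invol.
Qed.

Let O x := fconnect sig w x.

Lemma O_tau x : O x -> O (tau x).
Proof.
move=> Ox; apply: connect_trans Ox _.
by rewrite fconnect_sym; [rewrite -{2}(sigK x); apply: fconnect1| exact: sig_inj].
Qed.

Lemma O_iter_tau i : O (iter i tau w).
Proof. elim: i => [|i IH] /=; [exact: connect0| exact: O_tau]. Qed.

Lemma O_al x : O x -> O (nc al x).
Proof. by move=> Ox; rewrite -(iter_findex Ox) iter_tau; apply: O_iter_tau. Qed.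

Lemma O_be x : O x -> O (nc be x).
Proof.
move=> Ox; have -> : nc be x = nc al (sig x) by rewrite /sig nc_invol.
by apply: O_al; apply: connect_trans Ox (fconnect1 _ _).
Qed.

Lemma kr_O y : connect kr w y -> O y.
Proof.
have gen : forall p x, O x -> path kr x p -> O (last x p).
  elim=> [|z p IH] x Ox //= /andP[/orP[] /eqP -> pth]; apply: IH => //;
    [exact: O_al | exact: O_be].
case/connectP => p pth ->; apply: gen pth; exact: connect0.
Qed.

Lemma iter_sig_tau i x : iter i sig (iter i tau x) = x.
Proof.
elim: i x => [|i IH] x //.
by rewrite iterSr [iter i.+1 tau x]iterS sigK.
Qed.

Lemma period m : iter m sig w = w -> order sig w %| m.
Proof.
set L := order sig w => H.
have L0 : 0 < L := order_gt0 _ _.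
have HqL : forall q, iter (q * L) sig w = w.
  elim=> [|q IH] //; rewrite mulSn iterD IH; exact: iter_order sig_inj w.
have : iter (m %% L) sig w = w.
  by rewrite (divn_eq m L) addnC iterD HqL in H.
move=> H2; have := findex_iter (ltn_pmod m L0).
by rewrite H2 findex0 => /esym/eqP; rewrite /dvdn.
Qed.

Lemma K3 y y' : y != w -> y' != w -> y != y' ->
  (nc al y == y) || (nc be y == y) -> (nc al y' == y') || (nc be y' == y') ->
  connect kr w y -> connect kr w y' -> False.
Proof.
move=> yw y'w yy' fy fy' cy cy'.
have key : forall z, z != w -> (nc al z == z) || (nc be z == z) -> O z ->
   exists2 m, 0 < m < 2 * order sig w & (order sig w %| m) /\ (m = (findex sig w z).*2 \/ m = (findex sig w z).*2.+1).
  move=> z zw fz Oz; set i := findex sig w z.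
  have zi : iter i sig w = z by apply: iter_findex.
  have iL : i < order sig w by apply: findex_max.
  have i0 : 0 < i by rewrite lt0n findex_eq0 eq_sym.
  case/orP: fz => /eqP fz.
    exists i.*2; first by apply/andP; split; clear -iL i0; lia.
    split; last by left.
    apply: period; rewrite -addnn iterD zi -fz -zi iter_tau.
    exact: iter_sig_tau.
  exists i.*2.+1.
    by apply/andP; split; clear -iL i0; lia.
  split; last by right.
  apply: period.
  have : nc be z = iter i.+1 tau w.
    by rewrite -iter_tau /= /sig nc_invol zi.
  rewrite fz -zi => E1.
  by rewrite -addnn -addSn iterD E1 iter_sig_tau.
have [m1 r1 [d1 e1]] := key y yw fy (kr_O cy).
have [m2 r2 [d2 e2]] := key y' y'w fy' (kr_O cy').
have E1 := dvd_range r1 d1; have E2 := dvd_range r2 d2.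
have : findex sig w y = findex sig w y' by clear -E1 E2 e1 e2; lia.
by move=> H; move/eqP: yy'; apply; rewrite -(iter_findex (kr_O cy)) H (iter_findex (kr_O cy')).
Qed.
End K3.

Section Swap.
Hypothesis albe : al != be.
Variable z0 : V.
Definition K := [set x | connect kr z0 x].
Definition sw (b : bool) (c : 'I_k) := if b then (if c == al then be else if c == be then al else c) else c.

Lemma sw_invol b c : sw b (sw b c) = c.
Proof.
case: b => //=; case: (eqVneq c al) => [->|cal]; first by rewrite eq_sym (negbTE albe) eqxx.
case: (eqVneq c be) => [->|cbe]; first by rewrite eqxx.
by rewrite (negbTE cal) (negbTE cbe).
Qed.

Lemma sw_inj b : injective (sw b). Proof. exact: can_inj (sw_invol b). Qed.

Lemma sw_id b c : c != al -> c != be -> sw b c = c.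
Proof. by case: b => //= /negbTE -> /negbTE ->. Qed.

Lemma K_closed e x : e \in M -> incid e x -> (phi e == al) || (phi e == be) ->
  (x \in K) = (other e x \in K).
Proof.
move=> eM ex ce; rewrite !inE.
have r1 : kr x (other e x) by rewrite /kr -ncE //; case/orP: ce => /eqP ->; rewrite eqxx ?orbT.
have r2 : kr (other e x) x by rewrite kr_sym.
apply/idP/idP => H; apply: connect_trans H _; exact: connect1.
Qed.

Definition psi e := sw (src e \in K) (phi e).

Lemma psiE e x : e \in M -> incid e x -> psi e = sw (x \in K) (phi e).
Proof.
move=> eM ex; rewrite /psi.
case: (boolP ((phi e == al) || (phi e == be))) => [ce|].
  case: (eqVneq (src e) x) => [-> //|nsx].
  rewrite (K_closed eM ex ce) /other (negbTE nsx) //.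
by rewrite negb_or => /andP[h1 h2]; rewrite !sw_id.
Qed.

Lemma proper_psi : proper M psi.
Proof.
move=> e f eM fM nef [x /andP[ex fx]].
by rewrite (psiE eM ex) (psiE fM fx) (inj_eq (@sw_inj _)); apply: prM => //; exists x; rewrite ex fx.
Qed.

Lemma miss_psi x c : (c \in miss psi M x) = (sw (x \in K) c \in miss phi M x).
Proof.
apply/missP/missP => H e eM ex.
  move: (H e eM ex); rewrite (psiE eM ex); apply: contra => /eqP ->.
  by rewrite sw_invol.
by rewrite (psiE eM ex); apply: contra (H e eM ex) => /eqP <-; rewrite sw_invol.
Qed.
End Swap.
End Kempe.
Section Main2.
Variable M : {set E}.
Hypothesis maxM : forall M' : {set E}, M \proper M' -> ~ colorable M'.

Definition Reach phi y := [exists g, [&& g \notin M, incid g v & connect (rel phi M) (far g) y]].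
Definition relnb phi (b : 'I_k) u x :=
  [exists h, [&& h \in M, incid h v, far h == x, phi h \in miss phi M u & phi h != b]].
Definition Reach_nb phi b y := [exists g, [&& g \notin M, incid g v & connect (relnb phi b) (far g) y]].

Lemma ncol_add g : g \notin M -> ~ colorable (g |: M).
Proof.
move=> gM; apply: maxM; apply/properP; split; first exact: subsetUr.
by exists g; rewrite // !inE eqxx.
Qed.

Lemma fan_b' phi y c : proper M phi -> Reach phi y -> c \in miss phi M v -> c \notin miss phi M y.
Proof.
move=> pr /existsP[g /and3P[gM gv /connectP[p pth ->]]] cv.
case: (shortenP pth) => p' pth' up _.
exact: (fan_b (leqnn _) pr gM gv (ncol_add gM) pth' up cv).
Qed.

Lemma Reach_ext phi a x : Reach phi a -> rel phi M a x -> Reach phi x.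
Proof.
move=> /existsP[g /and3P[gM gv cn]] r; apply/existsP; exists g.
by rewrite gM gv (connect_trans cn (connect1 r)).
Qed.

Lemma nb_rel phi b u x : relnb phi b u x -> rel phi M u x.
Proof.
case/existsP=> h /and5P[hM hv fh hm _]; apply/existsP; exists h; by rewrite hM hv fh hm.
Qed.

Lemma nb_Reach phi b y : Reach_nb phi b y -> Reach phi y.
Proof.
case/existsP=> g /and3P[gM gv cn]; apply/existsP; exists g; rewrite gM gv /=.
case/connectP: cn => p pth ->; apply/connectP; exists p => //.
by apply: sub_path pth => a b'; apply: nb_rel.
Qed.

Lemma nb_exists phi b y : Reach phi y -> b \in miss phi M y ->
  exists2 y', Reach_nb phi b y' & b \in miss phi M y'.
Proof.
case/existsP=> g /and3P[gM gv /connectP[p pth ->]].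
have gen : forall p x, connect (relnb phi b) (far g) x -> path (rel phi M) x p ->
   b \in miss phi M (last x p) -> exists2 y', Reach_nb phi b y' & b \in miss phi M y'.
  elim=> [|z q IH] x cx /=.
    by move=> _ bx; exists x => //; apply/existsP; exists g; rewrite gM gv cx.
  case/andP=> /existsP[h /and4P[hM hv /eqP fh hm]] pq bl.
  case: (eqVneq (phi h) b) => [hb|hb].
    by exists x; [apply/existsP; exists g; rewrite gM gv cx| rewrite -hb].
  apply: IH pq bl; apply: connect_trans cx (connect1 _).
  by apply/existsP; exists h; rewrite hM hv fh eqxx hm hb.
by apply: gen; [exact: connect0|].
Qed.

Section Transfer.
Variables (phi psi : E -> 'I_k) (al be : 'I_k).
Hypothesis H1 : forall h, h \in M -> incid h v -> psi h = phi h.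
Hypothesis H2 : forall u c, c != al -> c != be -> (c \in miss psi M u) = (c \in miss phi M u).
Hypothesis Hal : al \in miss phi M v.

Lemma T1 u x : relnb phi be u x -> rel psi M u x.
Proof.
case/existsP=> h /and5P[hM hv fh hm hb]; apply/existsP; exists h.
have hal : phi h != al by move/missP: Hal; apply.
by rewrite hM hv fh H1 // H2.
Qed.

Lemma T2 a b : connect (relnb phi be) a b -> connect (rel psi M) a b.
Proof.
case/connectP => p pth ->; apply/connectP; exists p => //.
by apply: sub_path pth => ? ?; apply: T1.
Qed.

Lemma T3 y' : Reach psi y' -> be \in miss psi M y' ->
  forall p a, Reach psi a -> path (rel phi M) a p -> Reach psi (last a p).
Proof.
move=> Ry' by' p; elim: p => [|z q IH] a Ra //= /andP[r pq]; apply: IH pq.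
case/existsP: r => h /and4P[hM hv /eqP fh hm].
case: (eqVneq (phi h) be) => [hb|hb].
  apply: (Reach_ext Ry'); apply/existsP; exists h; by rewrite hM hv fh eqxx H1 // hb.
apply: (Reach_ext Ra); apply: T1; apply/existsP; exists h; by rewrite hM hv fh eqxx hm hb.
Qed.
End Transfer.


Lemma swap_hyps phi al be z0 : proper M phi -> al != be -> ~~ connect (kr M phi al be) z0 v ->
  (forall h, h \in M -> incid h v -> psi M phi al be z0 h = phi h) /\
  (forall u c, c != al -> c != be -> (c \in miss (psi M phi al be z0) M u) = (c \in miss phi M u)).
Proof.
move=> pr albe nc0; have vK : v \notin K M phi al be z0 by rewrite inE.
split.
  by move=> h hM hv; rewrite (psiE pr _ _ z0 hM hv) (negbTE vK).
by move=> u c cal cbe; rewrite (miss_psi pr albe) sw_id.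
Qed.

Lemma swap_contra phi al be z0 : proper M phi -> al != be -> al \in miss phi M v ->
  ~~ connect (kr M phi al be) z0 v -> be \in miss phi M z0 -> Reach (psi M phi al be z0) z0 -> False.
Proof.
move=> pr albe alv nc0 bz R.
have vK : v \notin K M phi al be z0 by rewrite inE.
have z0K : z0 \in K M phi al be z0 by rewrite inE connect0.
have h1 : al \in miss (psi M phi al be z0) M v by rewrite (miss_psi pr albe) (negbTE vK).
have h2 : al \in miss (psi M phi al be z0) M z0 by rewrite (miss_psi pr albe) z0K /sw eqxx.
by move: (fan_b' (proper_psi pr albe z0) R h1); rewrite h2.
Qed.

Lemma fan_a phi al be y1 y2 : proper M phi -> al \in miss phi M v -> Reach phi y1 -> Reach phi y2 ->
  y1 != y2 -> be \in miss phi M y1 -> be \in miss phi M y2 -> False.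
Proof.
move=> pr alv R1 R2 y12 b1 b2.
have [y' R' b'] := nb_exists R1 b1.
have R'' := nb_Reach R'.
have albe : al != be by apply: contraTneq b1 => <-; apply: fan_b' pr R1 alv.
have bev : be \notin miss phi M v by apply: contraTN b' => bv; apply: fan_b' pr R'' bv.
have [y [yR yb yy']] : exists y, [/\ Reach phi y, be \in miss phi M y & y != y'].
  case: (eqVneq y1 y') => [e|ne]; [exists y2; rewrite -e eq_sym | exists y1] => //.
have yv : y != v by apply: contraNneq bev => e; rewrite -e.
have y'v : y' != v by apply: contraNneq bev => e; rewrite -e.
have fv : nc M phi al v = v := nc_miss alv.
have fy : (nc M phi al y == y) || (nc M phi be y == y) by rewrite (nc_miss yb) eqxx orbT.
have fy' : (nc M phi al y' == y') || (nc M phi be y' == y') by rewrite (nc_miss b') eqxx orbT.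
have csym := sym_connect_sym (kr_sym pr al be).
have RT : forall z0, ~~ connect (kr M phi al be) z0 v -> Reach (psi M phi al be z0) y'.
  move=> z0 nz; have [H1 H2] := swap_hyps pr albe nz.
  case/existsP: R' => g /and3P[gM gv cn]; apply/existsP; exists g; rewrite gM gv /=.
  exact: (T2 H1 H2 alv cn).
case: (boolP (connect (kr M phi al be) v y')) => cvy'.
  have ncy : ~~ connect (kr M phi al be) v y.
    apply/negP => cvy; exact: (K3 pr fv yv y'v yy' fy fy' cvy cvy').
  have nz : ~~ connect (kr M phi al be) y v by rewrite csym.
  apply: (swap_contra pr albe alv nz yb).
  have [H1 H2] := swap_hyps pr albe nz.
  have y'K : y' \notin K M phi al be y.
    rewrite inE; apply: contra ncy => cyy'; apply: connect_trans cvy' _; by rewrite csym.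
  have by'' : be \in miss (psi M phi al be y) M y' by rewrite (miss_psi pr albe) (negbTE y'K).
  case/existsP: yR => g /and3P[gM gv /connectP[p pth ey]].
  rewrite {2}ey; apply: (T3 H1 H2 alv (RT y nz) by'' _ pth).
  by apply/existsP; exists g; rewrite gM gv connect0.
have nz : ~~ connect (kr M phi al be) y' v by rewrite csym.
exact: (swap_contra pr albe alv nz b' (RT y' nz)).
Qed.
Lemma joinsE e y : joins src tgt e v y = incid e v && (far e == y).
Proof.
rewrite /joins /incident /far; have := loopl e.
case: (eqVneq (src e) v) => [->|sv]; case: (eqVneq (tgt e) v) => [->|tv] //=; rewrite ?eqxx //=.
- by rewrite andbF orbF.
- by rewrite andbT.
- by rewrite andbF.
Qed.

Lemma card_at_v (Z : {set V}) :
  #|[set h in M | incid h v && (far h \in Z)]| = \sum_(y in Z) muM src tgt M v y.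
Proof.
rewrite -sum1_card (partition_big (fun h => far h) (fun y => y \in Z)) /=; last first.
  by move=> h; rewrite inE => /andP[_ /andP[_ ->]].
apply: eq_bigr => y yZ; rewrite sum1_card /muM; apply: eq_card => e; rewrite !inE joinsE.
rewrite unfold_in !inE; case: (eqVneq (far e) y) => [->|]; rewrite ?yZ ?andbT ?andbF //.
Qed.

Lemma card_miss phi x : proper M phi -> #|miss phi M x| + degM src tgt M x = k.
Proof.
move=> pr; set Ex := [set e in M | incid e x].
have -> : miss phi M x = ~: (phi @: Ex).
  apply/setP => c; rewrite in_setC; apply/missP/negP.
    move=> H /imsetP[e]; rewrite inE => /andP[eM ex] ce.
    by move: (H e eM ex); rewrite ce eqxx.
  move=> H e eM ex; apply/eqP => ce; apply: H; apply/imsetP; exists e => //.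
  by rewrite inE eM ex.
have ci : #|phi @: Ex| = #|Ex|.
  apply: card_in_imset => e f; rewrite !inE => /andP[eM ex] /andP[fM fx]; exact: (pc_eq pr eM fM ex fx).
by rewrite /degM -/Ex -ci addnC cardsC card_ord.
Qed.

Lemma sum_miss_le phi al : proper M phi -> al \in miss phi M v ->
  (\sum_(y in [set y | Reach phi y]) #|miss phi M y| <= \sum_(y in [set y | Reach phi y]) muM src tgt M v y)%N.
Proof.
move=> pr alv; set Y := [set y | Reach phi y].
rewrite -card_at_v.
set Eh := [set h in M | incid h v && (far h \in Y)].
apply: leq_trans (leq_imset_card phi Eh).
have -> : \sum_(y in Y) #|miss phi M y| = \sum_(y in Y) \sum_c (c \in miss phi M y : nat).
  apply: eq_bigr => y _; rewrite -sum1_card big_mkcond; apply: eq_bigr => c _.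
  by case: (c \in _).
rewrite exchange_big /= -sum1_card [X in (_ <= X)%N]big_mkcond; apply: leq_sum => c _.
case: (boolP [exists y in Y, c \in miss phi M y]) => [/existsP[y0 /andP[y0Y cy0]]|none].
  rewrite (bigD1 y0) //= cy0 big1 ?addn0.
    have Ry0 : Reach phi y0 by move: y0Y; rewrite inE.
    have : c \notin miss phi M v by apply: contraTN cy0 => cv; apply: fan_b' pr Ry0 cv.
    case/miss_ex => h hM /andP[hv /eqP hc].
    suff -> : c \in phi @: Eh by [].
    apply/imsetP; exists h => //; rewrite !inE hM hv /=.
    apply: Reach_ext Ry0 _; apply/existsP; exists h; by rewrite hM hv eqxx hc cy0.
  move=> y /andP[yY ny]; apply/eqP; rewrite eqb0; apply/negP => cy.
  move: yY y0Y; rewrite !inE => Ry Ry0.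
  exact: (fan_a pr alv Ry Ry0 ny cy cy0).
rewrite big1 // => y yY; apply/eqP; rewrite eqb0; apply: contra none => cy.
by apply/existsP; exists y; rewrite yY cy.
Qed.

Lemma final_nat phi : proper M phi -> (degM src tgt M v < k)%N ->
  (dF src tgt k M v + \sum_(w in Uk src tgt k M v) (k - degM src tgt M w - muG src tgt v w)
     <= degM src tgt M v)%N.
Proof.
move=> pr dv.
have [al alv] : exists al, al \in miss phi M v.
  have : (0 < #|miss phi M v|)%N by have := card_miss v pr; clear -dv; lia.
  by rewrite card_gt0 => /set0Pn.
set Y := [set y | Reach phi y].
set F := Fk src tgt k M v; set U := Uk src tgt k M v.
have UY : forall w, w \in U -> w \in Y.
  move=> w; rewrite inE => /andP[_ lt].
  have : [exists g, joins src tgt g v w && (g \notin M)].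
    apply: contraLR lt; rewrite negb_exists => /forallP H; rewrite -leqNgt.
    apply: subset_leq_card; apply/subsetP => e; rewrite !inE => je.
    by move: (H e); rewrite je /= negbK => ->.
  case/existsP => g /andP[]; rewrite joinsE => /andP[gv /eqP fg] gM.
  by rewrite inE; apply/existsP; exists g; rewrite gM gv -fg connect0.
have hs := sum_miss_le pr alv; rewrite -/Y in hs.
have e3 : degM src tgt M v = \sum_w muM src tgt M v w.
  transitivity (\sum_(w in [set: V]) muM src tgt M v w); last by apply: eq_bigl => w; rewrite inE.
  by rewrite -card_at_v; apply: eq_card => e; rewrite !inE andbT.
rewrite e3 /dF -/F.
rewrite [X in (X + _ <= _)%N]big_mkcond [X in (_ + X <= _)%N]big_mkcond /=.
rewrite [X in (X <= _)%N]big_mkcond [X in (_ <= X)%N]big_mkcond /= in hs.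
have key : (\sum_w ((if w \in F then muG src tgt v w else 0) +
                    (if w \in U then k - degM src tgt M w - muG src tgt v w else 0) +
                    (if w \in Y then muM src tgt M v w else 0))
           <= \sum_w (muM src tgt M v w + (if w \in Y then #|miss phi M w| else 0)))%N.
  apply: leq_sum => w _.
  have hmu : (muM src tgt M v w <= muG src tgt v w)%N.
    by apply: subset_leq_card; apply/subsetP => e; rewrite !inE => /andP[].
  have hm := card_miss w pr.
  have hU : (w \in U) = (w \in F) && (muM src tgt M v w < muG src tgt v w)%N by rewrite inE.
  have hF : w \in F -> (degM src tgt M w + muG src tgt v w <= k)%N by rewrite inE => /andP[].
  case wU: (w \in U).
    have wY := UY w wU.
    move: hU; rewrite wU => /esym/andP[wF lt].
    have := hF wF; rewrite wF wY /=; move: hm hmu lt; clear.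
    move: (degM src tgt M w) (muG src tgt v w) (muM src tgt M v w) #|miss phi M w| => a b c d.
    lia.
  case wF: (w \in F).
    move: hU; rewrite wU wF /= => /esym/negbT; rewrite -leqNgt => ge.
    have := hF wF; case: (w \in Y) => /=; move: hm hmu ge; clear;
    move: (degM src tgt M w) (muG src tgt v w) (muM src tgt M v w) #|miss phi M w| => a b c d;
    lia.
  by case: (w \in Y) => /=; move: hm hmu; clear;
    move: (degM src tgt M w) (muG src tgt v w) (muM src tgt M v w) #|miss phi M w| => a b c d;
    lia.
rewrite !big_split /= in key.
move: key hs; clear.
move: (\sum_i (if i \in F then muG src tgt v i else 0)) => A.
move: (\sum_i (if i \in U then k - degM src tgt M i - muG src tgt v i else 0)) => B.
move: (\sum_i (if i \in Y then muM src tgt M v i else 0)) => C.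
move: (\sum_i (if i \in Y then #|miss phi M i| else 0)) => D.
move: (\sum_i muM src tgt M v i) => G.
lia.
Qed.


End Main2.

End Fan.

Unset Implicit Arguments.
Import Order.TTheory GRing.Theory Num.Theory.
Local Open Scope ring_scope.

Theorem mainTheorem3 (V E : finType) (src tgt : E -> V) (k : nat)
  (M : {set E}) (v : V) :
  loopless src tgt ->
  (1 <= k)%N ->
  maximal_k_colorable src tgt k M ->
  (degM src tgt M v < k)%N ->
  ((dF src tgt k M v)%:Z <=
     (degM src tgt M v)%:Z -
     \sum_(w in Uk src tgt k M v)
        (k%:Z - (degM src tgt M w)%:Z - (muG src tgt v w)%:Z)).
Proof.
move=> loopl _ [[phi pr] maxM] dv.
have H := final_nat loopl maxM pr dv.
have eU : \sum_(w in Uk src tgt k M v) (k%:Z - (degM src tgt M w)%:Z - (muG src tgt v w)%:Z) =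
   ((\sum_(w in Uk src tgt k M v) (k - degM src tgt M w - muG src tgt v w))%N)%:Z.
  rewrite -[in RHS]natz natr_sum; apply: eq_bigr => w; rewrite !inE => /andP[/andP[_ hw] _].
  rewrite natz subzn; last by move: hw; clear; lia.
  rewrite subzn //; move: hw; clear; lia.
rewrite eU subzn; last by move: H; clear; lia.
rewrite lez_nat; move: H; clear; lia.
Qed.
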